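(* Let $G=(P,E)$ be a finite, connected, undirected, simple graph on the vertex set $P=\{1,\dots,n\}$ with $n\ge 2$, and let $W$ be a finite totally ordered set of $p$ words. Consider the automata network with confusion parameter $\epsilon=0$ described in the context, started from any initial configuration of the form $(M_u,x_u)=(\{x_u\},x_u)$ with $x_u\in W$ for every $u\in P$, and run under the sequential updating scheme given by any fixed permutation of $P$. Then the system reaches a fixed point within $\mathcal{O}(n^2p)$ time steps. That is, there is an absolute constant $C$ such that for every such $G$, $W$, initial configuration and permutation, after at most $Cn^2p$ steps the configuration is invariant under the local rule of every vertex.
   Context: Model. Each vertex $u\in P$ (an individual) has a state $(M_u,x_u)$, where the memory $M_u$ is a subset of $W$ and $x_u\in M_u$ is the word $u$ conveys to its neighbours. The neighbourhood of $u$ is $V_u=\{v\in P:(u,v)\in E\}$. The total order on $W$ is written $\prec$, and $\min$ refers to it. Local rule of $u$ for confusion parameter $\epsilon=0$. When $u$ is updated, it first forms $N_u=\{x_v : v\in V_u,\ x_v\notin M_u\}$ and $B_u=\{x_v : v\in V_u,\ x_v\in M_u\}$. If $N_u\neq\emptyset$, the memory becomes $M_u\cup N_u$ and $x_u$ is unchanged (addition). Otherwise the state becomes $(\{\min B_u\},\min B_u)$ (collapse). All other vertices keep their states. Updating schemes. One vertex is updated per time step. Under the sequential scheme, a fixed permutation $\sigma$ of $P$ is chosen and vertices are updated cyclically in the order $\sigma(1),\dots,\sigma(n),\sigma(1),\dots$, with each update using the current states. Under the fully-asynchronous scheme, at each time step one vertex is chosen uniformly at random from $P$, independently of all other steps.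 A fixed point is a configuration that is left unchanged by the local rule of every vertex. *)

(* Defs.v *)
From HB Require Import structures.
From mathcomp Require Import all_boot all_order all_fingroup.
Set Implicit Arguments. Unset Strict Implicit. Unset Printing Implicit Defensive.
Import Order.TTheory.
Local Open Scope order_scope.

Section Model.
Variables (d : Order.disp_t) (W : finOrderType d) (P : finType).

(* state of a vertex: (memory M_u, conveyed word x_u) *)
Definition state := ({set W} * W)%type.
Definition config := P -> state.

(* minimum of a finite set of words w.r.t. the total order of W;
   the default [dflt] is only used when the set is empty *)
Definition set_min (dflt : W) (B : {set W}) : W :=
  match enum B with
  | [::] => dflt
  | h :: t => foldr Order.min h t
  end.

Variable e : rel P.

Definition Nset (c : config) (u : P) : {set W} :=
  [set w | [exists v, [&& e u v, (c v).2 == w & w \notin (c u).1]]].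
Definition Bset (c : config) (u : P) : {set W} :=
  [set w | [exists v, [&& e u v, (c v).2 == w & w \in (c u).1]]].

(* local rule of u, confusion parameter epsilon = 0 *)
Definition local_rule (c : config) (u : P) : state :=
  if Nset c u != set0 then ((c u).1 :|: Nset c u, (c u).2)
  else let m := set_min (c u).2 (Bset c u) in ([set m], m).

Definition update (c : config) (u : P) : config :=
  fun v => if v == u then local_rule c u else c v.

(* vertex updated at time step t (t = 0,1,...) under the sequential scheme
   sigma(1),...,sigma(n),sigma(1),...: it is sigma of the (t mod n)-th vertex
   of the enumeration of P *)
Definition seq_vertex (sigma : {perm P}) (t : nat) : option P :=
  nth None [seq Some (sigma i) | i <- enum P] (t %% #|P|).

Fixpoint seq_run (sigma : {perm P}) (c0 : config) (t : nat) : config :=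
  match t with
  | 0 => c0
  | t'.+1 => let c := seq_run sigma c0 t' in
             match seq_vertex sigma t' with
             | Some u => update c u
             | None => c
             end
  end.

Definition is_fixed_point (c : config) : Prop := forall u, local_rule c u = c u.

Definition init_config (x : P -> W) : config := fun u => ([set x u], x u).

End Model.

(* Main.v *)
Require Import Defs.
From HB Require Import structures.
From mathcomp Require Import all_boot all_order all_fingroup.
From mathcomp Require Import zify.
Set Implicit Arguments. Unset Strict Implicit. Unset Printing Implicit Defensive.
Import Order.TTheory.

Section Gen.
Variables (d : Order.disp_t) (W : finOrderType d) (P : finType) (e : rel P).

Lemma foldr_min_mem (h : W) (s : seq W) : foldr Order.min h s \in h :: s.
Proof.
elim: s => [|a s IH] /=; first by rewrite inE.
rewrite minEle; case: ifP => _; first by rewrite !inE eqxx orbT.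
by move: IH; rewrite !inE => /orP[->|->]; rewrite ?orbT.
Qed.

Lemma foldr_min_le (h : W) (s : seq W) y : y \in h :: s -> (foldr Order.min h s <= y)%O.
Proof.
elim: s y => [|a s IH] y /=; first by rewrite inE => /eqP ->.
rewrite ge_min !inE => /or3P[/eqP->|/eqP->|yin].
- by apply/orP; right; apply: IH; rewrite inE eqxx.
- by rewrite lexx.
- by apply/orP; right; apply: IH; rewrite inE yin orbT.
Qed.

Lemma set_min_mem (dflt : W) (B : {set W}) : B != set0 -> set_min dflt B \in B.
Proof.
rewrite /set_min => /set0Pn [y yB].
have: y \in enum B by rewrite mem_enum.
case E: (enum B) => [|h t] // _.
by rewrite -mem_enum E foldr_min_mem.
Qed.

Lemma set_min_le (dflt : W) (B : {set W}) y : y \in B -> (set_min dflt B <= y)%O.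
Proof.
rewrite /set_min -mem_enum; case: (enum B) => [|h t] //.
exact: foldr_min_le.
Qed.

Lemma set_min_cases (dflt : W) (B : {set W}) :
  set_min dflt B = dflt /\ B = set0 \/ set_min dflt B \in B.
Proof.
case: (eqVneq B set0) => [->|BN]; last by right; exact: set_min_mem.
left; split => //; rewrite /set_min.
suff -> : enum (set0 : {set W}) = [::] by [].
by apply/eqP; rewrite -size_eq0 -cardE cards0.
Qed.

End Gen.
Section Gen2.
Variables (d : Order.disp_t) (W : finOrderType d) (P : finType) (e : rel P).
Implicit Types (c : config W P).

Lemma LR_add c u : Nset e c u != set0 -> local_rule e c u = ((c u).1 :|: Nset e c u, (c u).2).
Proof. by rewrite /local_rule => ->. Qed.

Lemma LR_col c u : Nset e c u = set0 ->
  local_rule e c u = ([set set_min (c u).2 (Bset e c u)], set_min (c u).2 (Bset e c u)).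
Proof. by rewrite /local_rule => ->; rewrite eqxx. Qed.

Lemma Nset_in c u w : w \in Nset e c u -> exists v, [/\ e u v, (c v).2 = w & w \notin (c u).1].
Proof. by rewrite inE => /existsP[v /and3P[? /eqP ? ?]]; exists v. Qed.

Lemma Bset_in c u w : w \in Bset e c u -> exists v, [/\ e u v, (c v).2 = w & w \in (c u).1].
Proof. by rewrite inE => /existsP[v /and3P[? /eqP ? ?]]; exists v. Qed.

Lemma nb_in_B c u v : Nset e c u = set0 -> e u v -> (c v).2 \in Bset e c u.
Proof.
move=> N0 euv.
have : (c v).2 \notin Nset e c u by rewrite N0 inE.
rewrite !inE => /existsPn /(_ v); rewrite euv eqxx /= negbK => H.
by apply/existsP; exists v; rewrite euv eqxx H.
Qed.

Lemma LR_word c u : (local_rule e c u).2 = (c u).2 \/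
  exists v, e u v /\ (local_rule e c u).2 = (c v).2.
Proof.
case: (eqVneq (Nset e c u) set0) => [N0|NN]; last by left; rewrite LR_add.
rewrite LR_col //=.
case: (set_min_cases (c u).2 (Bset e c u)) => [[-> _]|]; first by left.
by move/Bset_in => [v [euv <- _]]; right; exists v.
Qed.

Lemma LR_uniform c u m : (forall v, (c v).2 = m) -> m \in (c u).1 ->
  local_rule e c u = ([set m], m).
Proof.
move=> Hall mu.
have N0 : Nset e c u = set0.
  apply/setP => w; rewrite in_set0; apply/negP => /Nset_in[v [_ ]].
  by rewrite Hall => <-; rewrite mu.
rewrite LR_col //.
suff -> : set_min (c u).2 (Bset e c u) = m by [].
case: (set_min_cases (c u).2 (Bset e c u)) => [[-> _]|]; first exact: Hall.
by move/Bset_in => [v [_ <- _]].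
Qed.

End Gen2.
Section Main.
Variables (n : nat) (e : rel 'I_n) (d : Order.disp_t) (W : finOrderType d)
  (x : 'I_n -> W) (sigma : {perm 'I_n}).
Hypotheses (n2 : 1 < n) (esym : symmetric e) (eirr : irreflexive e)
  (econ : forall u v, connect e u v).

Local Notation c t := (seq_run e sigma (init_config x) t).
Local Notation wd t u := (c t u).2.
Local Notation mem t u := (c t u).1.

Lemma step_cases t w : c t.+1 w = c t w \/
  (seq_vertex sigma t = Some w /\ c t.+1 w = local_rule e (c t) w).
Proof.
rewrite /=; case: (seq_vertex sigma t) => [u|]; last by left.
rewrite /update; case: (eqVneq w u) => [->|]; last by left.
by right.
Qed.

Lemma step_other t w u : seq_vertex sigma t = Some u -> w != u -> c t.+1 w = c t w.
Proof. by move=> /= ->; rewrite /update => /negbTE ->. Qed.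

Lemma step_self t u : seq_vertex sigma t = Some u -> c t.+1 u = local_rule e (c t) u.
Proof. by move=> /= ->; rewrite /update eqxx. Qed.

Definition S := [set x u | u in 'I_n].
Definition k := #|S|.
Definition present t := [set wd t u | u in 'I_n].

Lemma wd_step t w : wd t.+1 w = wd t w \/ exists v, e w v /\ wd t.+1 w = wd t v.
Proof.
case: (step_cases t w) => [->|[_ ->]]; first by left.
exact: LR_word.
Qed.

Lemma pres_step t : present t.+1 \subset present t.
Proof.
apply/subsetP => w /imsetP[u _ ->].
case: (wd_step t u) => [->|[v [_ ->]]]; exact: imset_f.
Qed.

Lemma pres_mono t t' : t <= t' -> present t' \subset present t.
Proof.
move=> /subnK <-; elim: (t' - t) => [|j IH] //=.
exact: subset_trans (pres_step _) IH.
Qed.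

Lemma wd_pres t u : wd t u \in present t.
Proof. exact: imset_f. Qed.

Lemma inv t u : wd t u \in mem t u /\ mem t u \subset S.
Proof.
elim: t u => [|t IH] u.
  by rewrite /= /init_config /= set11 sub1set; split => //; exact: imset_f.
have PS : present t \subset S.
  apply/subsetP => w /imsetP[v _ ->]; have [h1 h2] := IH v; exact: (subsetP h2).
case: (step_cases t u) => [->|[_ ->]]; first exact: IH.
case: (eqVneq (Nset e (c t) u) set0) => [N0|NN].
  rewrite LR_col //=; split; first by rewrite set11.
  rewrite sub1set; case: (set_min_cases (wd t u) (Bset e (c t) u)) => [[-> _]|].
    exact: (subsetP PS _ (wd_pres _ _)).
  move/Bset_in => [v [_ <- _]]; exact: (subsetP PS _ (wd_pres _ _)).
rewrite LR_add //=; have [h1 h2] := IH u; split; first by rewrite inE h1.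
rewrite subUset h2 /=; apply/subsetP => w /Nset_in[v [_ <- _]].
exact: (subsetP PS _ (wd_pres _ _)).
Qed.

Lemma pres_S t : present t \subset S.
Proof. apply/subsetP => w /imsetP[v _ ->]; have [h1 h2] := inv t v; exact: (subsetP h2). Qed.

Lemma mem_card t u : 0 < #|mem t u| <= k.
Proof.
have [h1 h2] := inv t u; rewrite (subset_leq_card h2) andbT.
by apply/card_gt0P; exists (wd t u).
Qed.

Lemma seq_vertexE s : seq_vertex sigma s =
   Some (sigma (nth (Ordinal (ltnW n2)) (enum 'I_n) (s %% n))).
Proof.
rewrite /seq_vertex card_ord (nth_map (Ordinal (ltnW n2))) //.
by rewrite size_enum_ord ltn_mod (ltnW n2).
Qed.

Lemma window t u : exists s, t <= s < t + n /\ seq_vertex sigma s = Some u.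
Proof.
set i := (sigma^-1)%g u.
have n0 : 0 < n by exact: ltnW n2.
have hi : i < n := ltn_ord i.
have hr : t %% n < n by rewrite ltn_mod.
have ht := divn_eq t n.
exists ((t %/ n + (i < t %% n)) * n + i); split.
  case: ltnP => h /=; lia.
rewrite seq_vertexE modnMDl modn_small //.
congr Some; rewrite -[RHS](permKV sigma u); congr (sigma _).
by apply: val_inj; rewrite /= nth_enum_ord.
Qed.


Definition nocol u a b := forall s, a <= s < b -> seq_vertex sigma s = Some u ->
  Nset e (c s) u != set0.

Lemma mem_step_sub s u : (seq_vertex sigma s = Some u -> Nset e (c s) u != set0) ->
  mem s u \subset mem s.+1 u.
Proof.
move=> H; case: (step_cases s u) => [->|[hs ->]]; first exact: subxx.
by rewrite LR_add ?H //= subsetUl.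
Qed.

Lemma mem_step_grow s u : seq_vertex sigma s = Some u -> Nset e (c s) u != set0 ->
  #|mem s u| < #|mem s.+1 u|.
Proof.
move=> hs NN; rewrite (step_self hs) LR_add //=; apply: proper_card.
case/set0Pn: NN => w wN; have [v [_ _ wn]] := Nset_in wN.
apply/properP; split; first exact: subsetUl.
by exists w; [rewrite in_setU wN orbT | exact: wn].
Qed.

Lemma mem_mono u a b : nocol u a b -> a <= b -> mem a u \subset mem b u.
Proof.
move=> H hab.
suff G : forall j, a + j <= b -> mem a u \subset mem (a + j) u.
  by have := G (b - a); rewrite subnKC //; apply.
elim=> [|j IH] hj; first by rewrite addn0 subxx.
have hj2 : a + j <= b by lia.
rewrite addnS; apply: (subset_trans (IH hj2)); apply: mem_step_sub.
by apply: H; lia.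
Qed.

Lemma collapse t u : exists s, [/\ t <= s < t + k * n, seq_vertex sigma s = Some u &
  Nset e (c s) u = set0].
Proof.
case B: (has (fun s => (seq_vertex sigma s == Some u) && (Nset e (c s) u == set0))
  (iota t (k * n))).
  case/hasP: B => s; rewrite mem_iota => hs /andP[/eqP h1 /eqP h2].
  by exists s; split.
have NC : nocol u t (t + k * n).
  move=> s hs hv; move/hasPn: B => /(_ s); rewrite mem_iota hs hv eqxx /=; exact.
have G : forall j, j <= k -> j + #|mem t u| <= #|mem (t + j * n) u|.
  elim=> [|j IH] hj; first by rewrite addn0.
  have [s [hs hv]] := window (t + j * n) u.
  have h1 := IH (ltnW hj).
  have hjn : j.+1 * n <= k * n := leq_mul hj (leqnn n).
  rewrite mulSn in hjn.
  have h2 : #|mem (t + j * n) u| <= #|mem s u|.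
    apply/subset_leq_card/mem_mono; last by case/andP: hs.
    move=> r hr; apply: NC; lia.
  have h3 := mem_step_grow hv (NC s ltac:(lia) hv).
  have h4 : #|mem s.+1 u| <= #|mem (t + j.+1 * n) u|.
    apply/subset_leq_card/mem_mono; last by rewrite mulSn; lia.
    move=> r hr; apply: NC; move: hr; rewrite mulSn; lia.
  lia.
have := G k (leqnn k); have /andP[h5 h6] := mem_card (t + k * n) u.
have /andP[h7 _] := mem_card t u; lia.
Qed.


Definition lower t m := forall u, (m <= wd t u)%O.

Lemma lower_mono t t' m : lower t m -> t <= t' -> lower t' m.
Proof.
move=> H le u; have := subsetP (pres_mono le) _ (wd_pres t' u).
by case/imsetP => v _ ->.
Qed.

Lemma col_m t w v m : lower t m -> Nset e (c t) w = set0 -> e w v -> wd t v = m ->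
  (local_rule e (c t) w).2 = m.
Proof.
move=> L N0 ewv hv; rewrite LR_col //=.
have vB := nb_in_B N0 ewv; rewrite hv in vB.
apply: le_anti; rewrite (set_min_le _ vB) /=.
have : Bset e (c t) w != set0 by apply/set0Pn; exists m.
move/(set_min_mem (wd t w)) => /Bset_in[v' [_ <- _]]; exact: L.
Qed.

Lemma keep t u v m : lower t m -> wd t u = m -> e u v -> wd t v = m -> wd t.+1 u = m.
Proof.
move=> L hu euv hv; case: (step_cases t u) => [->|[_ ->]] //.
case: (eqVneq (Nset e (c t) u) set0) => [N0|NN]; last by rewrite LR_add.
exact: col_m N0 euv hv.
Qed.

Definition solidb t m u := (wd t u == m) && [exists v, e u v && (wd t v == m)].

Lemma solid_step t m u : lower t m -> solidb t m u -> solidb t.+1 m u.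
Proof.
move=> L /andP[/eqP hu /existsP[v /andP[euv /eqP hv]]].
rewrite /solidb (keep L hu euv hv) eqxx /=; apply/existsP; exists v.
have evu : e v u by rewrite esym.
by rewrite euv (keep L hv evu hu) eqxx.
Qed.

Lemma solid_mono t t' m u : lower t m -> solidb t m u -> t <= t' -> solidb t' m u.
Proof.
move=> L H /subnK <-; elim: (t' - t) => [|j IH] //.
rewrite addSn; apply: solid_step IH; apply: lower_mono L _; exact: leq_addl.
Qed.

Lemma crossing (A : {set 'I_n}) v0 u : v0 \in A -> u \notin A ->
  exists a b, [/\ a \in A, b \notin A & e a b].
Proof.
move=> v0A; have /connectP[p pp ->] := econ v0 u.
elim: p v0 v0A pp => [|y p IH] v0 v0A /=; first by move=> _; rewrite v0A.
case/andP=> ev0y pp uA; case yA: (y \in A); first exact: IH yA pp uA.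
by exists v0, y; rewrite yA.
Qed.

Lemma has_nb u : exists v, e u v.
Proof.
set v : 'I_n := if nat_of_ord u == 0 then Ordinal n2 else Ordinal (ltnW n2).
have uv : v \notin [set u].
  rewrite inE /v; case: (eqVneq (nat_of_ord u) 0) => h; apply/negP => /eqP /(congr1 val) /=; lia.
have [a [b [aA _ eab]]] := crossing (set11 u) uv.
by exists b; move: aA; rewrite inE => /eqP <-.
Qed.

Lemma spread t m v w : lower t m -> solidb t m v -> e w v -> solidb (t + k * n) m w.
Proof.
move=> L sv ewv; have [s [hs hw N0]] := collapse t w.
case/andP: hs => h1 h2.
have svs := solid_mono L sv h1; have Ls := lower_mono L h1.
have sv1 := solid_step Ls svs.
apply: (solid_mono (lower_mono L (leqW h1))) _ h2.
case/andP: svs => /eqP hv _; case/andP: sv1 => /eqP hv1 _.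
rewrite /solidb (step_self hw) (col_m Ls N0 ewv hv) eqxx /=.
by apply/existsP; exists v; rewrite ewv hv1 eqxx.
Qed.

Lemma all_solid t m v0 : lower t m -> solidb t m v0 ->
  forall u, solidb (t + n.-1 * (k * n)) m u.
Proof.
move=> L s0.
pose Sol j := [set u | solidb (t + j * (k * n)) m u].
have Lj : forall j, lower (t + j * (k * n)) m by move=> j; apply: lower_mono L _; exact: leq_addr.
have sub : forall j, Sol j \subset Sol j.+1.
  move=> j; apply/subsetP => u; rewrite !inE => H; apply: solid_mono (Lj j) H _.
  rewrite mulSn; lia.
have G : forall j, j < n -> j.+1 <= #|Sol j|.
  elim=> [|j IH] hj.
    apply/card_gt0P; exists v0; rewrite inE mul0n addn0; exact: s0.
  have IH' := IH (ltnW hj).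
  case: (boolP ([set: 'I_n] \subset Sol j)) => [full|].
    apply: leq_trans (subset_leq_card (sub j)).
    apply: leq_trans (subset_leq_card full); rewrite cardsT card_ord //.
  case/subsetPn => u _ uS.
  have v0S : v0 \in Sol j by rewrite inE; apply: solid_mono L s0 _; exact: leq_addr.
  have [a [b [aS bS eab]]] := crossing v0S uS.
  have bS1 : b \in Sol j.+1.
    rewrite inE (_ : t + j.+1 * (k * n) = t + j * (k * n) + k * n); last by rewrite mulSn; lia.
    apply: (spread (Lj j) (v := a)); [by move: aS; rewrite inE | by rewrite esym].
  have : b |: Sol j \subset Sol j.+1 by rewrite subUset sub1set bS1 sub.
  move/subset_leq_card; rewrite cardsU1 bS /= add1n => h.
  by apply: leq_trans h; rewrite ltnS.
move=> u.
have n1 : n.-1 < n by lia.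
have := G _ n1; have : Sol n.-1 \subset [set: 'I_n] by exact: subsetT.
move=> sT cn.
have : Sol n.-1 == [set: 'I_n].
  by rewrite eqEcard sT cardsT card_ord; move: cn; rewrite prednK //; lia.
by move/eqP/setP/(_ u); rewrite !inE.
Qed.


Definition pairb t m := [exists u, [exists v, [&& e u v, wd t u == m & wd t v == m]]].

Lemma NI s w m : lower s m -> ~~ pairb s.+1 m -> wd s.+1 w = m -> wd s w = m.
Proof.
move=> L np; case: (step_cases s w) => [->|[hs ->]] //.
case: (eqVneq (Nset e (c s) w) set0) => [N0|NN]; last by rewrite LR_add.
rewrite LR_col //=.
case: (set_min_cases (wd s w) (Bset e (c s) w)) => [[-> _]|] //.
move/Bset_in => [v [ewv hvm _]] hv.
have vw : v != w by apply/eqP => vw; move: ewv; rewrite vw eirr.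
case/negP: np; apply/existsP; exists w; apply/existsP; exists v.
by rewrite ewv (step_other hs vw) (step_self hs) LR_col //= hv hvm hv !eqxx.
Qed.

Lemma vanish t m : lower t m ->
  (forall s, t <= s <= t + k * n -> ~~ pairb s m) -> forall u, wd (t + k * n) u != m.
Proof.
move=> L np u; have [s [hs hu N0]] := collapse t u.
case/andP: hs => h1 h2.
have Ls := lower_mono L h1.
have H1 : wd s.+1 u != m.
  apply/eqP => hm.
  have [v euv] := has_nb u.
  move: hm; rewrite (step_self hu) LR_col //=.
  case: (set_min_cases (wd s u) (Bset e (c s) u)) => [[_ B0]|].
    by have := nb_in_B N0 euv; rewrite B0 inE.
  move/Bset_in => [v' [euv' hvm _]] hv'.
  have vu : v' != u by apply/eqP => vu; move: euv'; rewrite vu eirr.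
  have hs1 : t <= s.+1 <= t + k * n by lia.
  have /negP := np s.+1 hs1; apply.
  apply/existsP; exists u; apply/existsP; exists v'.
  by rewrite euv' (step_other hu vu) (step_self hu) LR_col //= hv' hvm hv' !eqxx.
suff G : forall j, s.+1 + j <= t + k * n -> wd (s.+1 + j) u != m.
  by have := G (t + k * n - s.+1); rewrite subnKC //; apply.
elim=> [|j IH] hj; first by rewrite addn0.
have IH' := IH ltac:(lia).
rewrite addnS; apply/negP => /eqP hm.
have L' : lower (s.+1 + j) m by apply: lower_mono L _; lia.
have np' : ~~ pairb (s.+1 + j).+1 m by apply: np; lia.
by move: IH'; rewrite (NI L' np' hm) eqxx.
Qed.

Lemma phase1 j t : #|present t| <= j -> exists T m u v,
  [/\ T <= t + j * (k * n), lower T m, e u v, wd T u = m & wd T v = m].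
Proof.
elim: j t => [|j IH] t hj.
  have : 0 < #|present t| by apply/card_gt0P; exists (wd t (Ordinal (ltnW n2))); exact: wd_pres.
  lia.
set m := set_min (wd t (Ordinal (ltnW n2))) (present t).
have mP : m \in present t by apply: set_min_mem; apply/set0Pn; exists (wd t (Ordinal (ltnW n2))); exact: wd_pres.
have L : lower t m by move=> u; apply: set_min_le; exact: wd_pres.
case B: (has (fun s => pairb s m) (iota t (k * n).+1)).
  case/hasP: B => s; rewrite mem_iota => /andP[h1 h2] /existsP[u /existsP[v /and3P[euv /eqP hu /eqP hv]]].
  exists s, m, u, v; split => //; last exact: lower_mono L h1.
  rewrite mulSn; lia.
have np : forall s, t <= s <= t + k * n -> ~~ pairb s m.
  move=> s hs; apply/negP => ps; move/negbT/hasPn: B => /(_ s); rewrite mem_iota ps.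
  have hs' : t <= s < t + (k * n).+1 by lia.
  by move/(_ hs').
have V := vanish L np.
have lt : #|present (t + k * n)| < #|present t|.
  apply: proper_card; apply/properP; split; first by apply: pres_mono; exact: leq_addr.
  exists m => //; apply/imsetP => [[u _ hu]]; by move: (V u); rewrite -hu eqxx.
have [T [m' [u [v [hT H1 H2 H3 H4]]]]] := IH (t + k * n) ltac:(lia).
exists T, m', u, v; split => //; rewrite mulSn; lia.
Qed.

Lemma final : exists t, t <= 3 * n ^ 2 * #|W| /\
    is_fixed_point e (c t).
Proof.
have [T [m [u [v [hT L euv hu hv]]]]] := phase1 (subset_leq_card (pres_S 0)).
have su : solidb T m u by rewrite /solidb hu eqxx /=; apply/existsP; exists v; rewrite euv hv eqxx.
set T1 := T + n.-1 * (k * n).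
have AS := all_solid L su.
have L1 : lower T1 m by apply: lower_mono L _; exact: leq_addr.
have allm : forall s w, T1 <= s -> wd s w = m.
  by move=> s w hs; have /andP[/eqP] := solid_mono L1 (AS w) hs.
have LRm : forall s w, T1 <= s -> m \in mem s w -> local_rule e (c s) w = ([set m], m).
  move=> s w hs hm; apply: LR_uniform => //; move=> v'; exact: allm.
have good : forall w, c (T1 + n) w = ([set m], m).
  move=> w; have [s [hs hw]] := window T1 w; case/andP: hs => h1 h2.
  have E1 : c s.+1 w = ([set m], m).
    rewrite (step_self hw) LRm //; have [h _] := inv s w; by rewrite -(allm s w h1).
  suff G : forall j, s.+1 + j <= T1 + n -> c (s.+1 + j) w = ([set m], m).
    by have := G (T1 + n - s.+1); rewrite subnKC //; apply.
  elim=> [|j IH] hj; first by rewrite addn0.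
  rewrite addnS; case: (step_cases (s.+1 + j) w) => [->|[_ ->]]; first by apply: IH; lia.
  rewrite LRm ?(IH ltac:(lia)) ?set11 //; lia.
exists (T1 + n); split.
  have kn : k <= n by rewrite /k /S; apply: leq_trans (leq_imset_card _ _) _; rewrite card_ord.
  have kp : k <= #|W| by apply: max_card.
  have p1 : 0 < #|W| by apply/card_gt0P; exists (x (Ordinal (ltnW n2))).
  rewrite add0n in hT; rewrite /T1.
  have h1 : k * (k * n) <= n * n * #|W|.
    rewrite mulnA [n * n * _]mulnAC; apply: leq_mul (leq_mul kn kp) (leqnn n).
  have h2 : n.-1 * (k * n) <= n * n * #|W|.
    rewrite [k * n]mulnC mulnA; apply: leq_mul (leq_mul (leq_pred n) (leqnn n)) kp.
  have h3 : n <= n * n * #|W|.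
    rewrite -mulnA; apply: leq_pmulr; rewrite muln_gt0 p1 andbT; exact: ltnW n2.
  have hT2 : T <= k * (k * n) := hT.
  rewrite expnS expn1 -mulnA; lia.
move=> w; rewrite good; apply: LR_uniform; last by rewrite good set11.
by move=> v'; rewrite good.
Qed.

End Main.

Theorem theorem1 :
  exists C : nat,
  forall (n : nat) (e : rel 'I_n),
    2 <= n -> symmetric e -> irreflexive e -> (forall u v, connect e u v) ->
  forall (d : Order.disp_t) (W : finOrderType d) (x : 'I_n -> W)
         (sigma : {perm 'I_n}),
  exists t, t <= C * n ^ 2 * #|W| /\
    is_fixed_point e (seq_run e sigma (init_config x) t).
Proof.
exists 3 => n e n2 es ei ec d W x sigma.
exact: final.
Qed.
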